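(* Let $k\ge1$. The T-ideal of $F(\mathfrak B)$ generated by (the element corresponding to) $(y_1z_2-y_2z_1)^k$ contains $(y_1z_1)^k(y_1-z_1)^k$, and hence contains $(y_1z_1)^k(y_1-z_1)^k\,w^{(j)}_\mu$ for every partition $\mu=(\mu_1,\mu_2)$ and every admissible $j$.
   Context: $K$ is a field of characteristic $0$. $\mathfrak B$ is the variety of bicommutative algebras (identities $(x_1x_2)x_3=(x_1x_3)x_2$, $x_1(x_2x_3)=x_2(x_1x_3)$), with free algebra $F(\mathfrak B)$ on $x_1,x_2,\dots$; a T-ideal is a two-sided ideal closed under all endomorphisms. Model: with $K[Y,Z]$ the commutative polynomial ring in $y_1,y_2,\dots,z_1,z_2,\dots$, the algebra $G$ has basis $\{x_i\}\cup\{Y^\alpha Z^\beta:|\alpha|,|\beta|>0\}$ and multiplication $x_ix_j=y_iz_j$, $x_i\cdot(Y^\alpha Z^\beta)=y_iY^\alpha Z^\beta$, $(Y^\alpha Z^\beta)\cdot x_j=Y^\alpha Z^\beta z_j$, $(Y^\alpha Z^\beta)(Y^\gamma Z^\delta)=Y^{\alpha+\gamma}Z^{\beta+\delta}$; it is known that $x_i\mapsto x_i$ gives an isomorphism $F(\mathfrak B)\cong G$, so elements of $F(\mathfrak B)^2$ are polynomials in the $y_i,z_i$ of positive degree in both sets, and the product in $G$ of two such elements is their product as polynomials. The elements $w^{(j)}_\mu$ are $w^{(j)}_{(n)}=y_1^jz_1^{n-j}$ ($1\le j\le n-1$) and, for $\mu_2>0$, $w^{(j)}_\mu=y_1^j(y_1z_2-y_2z_1)^{\mu_2}z_1^{\mu_1-\mu_2-j}$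 ($0\le j\le\mu_1-\mu_2$). *)

(* Defs.v *)
From HB Require Import structures.
From mathcomp Require Import all_boot all_order all_algebra.
Set Implicit Arguments. Unset Strict Implicit. Unset Printing Implicit Defensive.
Import Order.TTheory GRing.Theory Num.Theory.
Local Open Scope ring_scope.

(* Concrete model G of the free bicommutative algebra F(B) over a field K.
   Variables y_1,y_2,... and z_1,z_2,... are indexed from 0:  y_{i+1} is "y i".
   Polynomials of K[Y,Z] are represented by their polynomial functions
   (K has characteristic 0, hence is infinite, so this is faithful). *)

Section Model.
Variable K : fieldType.

Definition pfun := (nat -> K) -> (nat -> K) -> K.

Inductive is_poly : pfun -> Prop :=
| PolyC (c : K) : is_poly (fun _ _ => c)
| PolyY (i : nat) : is_poly (fun y _ => y i)
| PolyZ (i : nat) : is_poly (fun _ z => z i)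
| PolyAdd (p q : pfun) : is_poly p -> is_poly q -> is_poly (fun y z => p y z + q y z)
| PolyMul (p q : pfun) : is_poly p -> is_poly q -> is_poly (fun y z => p y z * q y z).

(* polynomials of positive degree in both sets of variables (= F(B)^2):
   no monomial free of the y's, no monomial free of the z's *)
Definition is_sq_poly (p : pfun) : Prop :=
  [/\ is_poly p, (forall z, p (fun _ => 0) z = 0) & (forall y, p y (fun _ => 0) = 0)].

(* An element  sum_i a_i x_i + p  of G is stored as the pair
   (fun t => sum_i a_i t_i, p) *)
Definition carrier := (((nat -> K) -> K) * pfun)%type.

Definition is_linform (l : (nat -> K) -> K) : Prop :=
  exists (n : nat) (a : nat -> K), l = fun t => \sum_(i < n) a i * t i.

Definition inG (u : carrier) : Prop := is_linform u.1 /\ is_sq_poly u.2.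

Definition gx (i : nat) : carrier := (fun t => t i, fun _ _ => 0).
Definition gpoly (p : pfun) : carrier := (fun _ => 0, p).

Definition gzero : carrier := (fun _ => 0, fun _ _ => 0).
Definition gadd (u v : carrier) : carrier :=
  (fun t => u.1 t + v.1 t, fun y z => u.2 y z + v.2 y z).
Definition gscale (c : K) (u : carrier) : carrier :=
  (fun t => c * u.1 t, fun y z => c * u.2 y z).

(* multiplication of G: x_i x_j = y_i z_j, x_i.m = y_i m, m.x_j = m z_j,
   m.m' = m m'; i.e. (l + p)(l' + q) = (l(y) + p)(l'(z) + q) *)
Definition gmul (u v : carrier) : carrier :=
  (fun _ => 0, fun y z => (u.1 y + u.2 y z) * (v.1 z + v.2 y z)).

Definition is_ideal (I : carrier -> Prop) : Prop :=
  (forall u, I u -> inG u) /\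
  I gzero /\
  (forall u v, I u -> I v -> I (gadd u v)) /\
  (forall c u, I u -> I (gscale c u)) /\
  (forall u v, inG u -> I v -> I (gmul u v)) /\
  (forall u v, inG u -> I v -> I (gmul v u)).

Definition is_endo (phi : carrier -> carrier) : Prop :=
  [/\ forall u, inG u -> inG (phi u),
      forall u v, inG u -> inG v -> phi (gadd u v) = gadd (phi u) (phi v),
      forall c u, inG u -> phi (gscale c u) = gscale c (phi u)
    & forall u v, inG u -> inG v -> phi (gmul u v) = gmul (phi u) (phi v)].

Definition is_Tideal (I : carrier -> Prop) : Prop :=
  is_ideal I /\ forall phi, is_endo phi -> forall u, I u -> I (phi u).

Definition in_Tideal_gen (f u : carrier) : Prop :=
  forall I, is_Tideal I -> I f -> I u.

End Model.

Definition standard_poly (K : fieldType) (k : nat) : pfun K :=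
  fun y z => (y 0%N * z 1%N - y 1%N * z 0%N) ^+ k.

Definition target_poly (K : fieldType) (k : nat) : pfun K :=
  fun y z => (y 0%N * z 0%N) ^+ k * (y 0%N - z 0%N) ^+ k.

Definition w_admissible (mu1 mu2 j : nat) : Prop :=
  (mu2 <= mu1)%N /\
  (if mu2 == 0%N then (1 <= j)%N && (j <= mu1 - 1)%N else (j <= mu1 - mu2)%N).

Definition w_poly (K : fieldType) (mu1 mu2 j : nat) : pfun K :=
  if mu2 == 0%N then fun y z => y 0%N ^+ j * z 0%N ^+ (mu1 - j)
  else fun y z => y 0%N ^+ j * (y 0%N * z 1%N - y 1%N * z 0%N) ^+ mu2
                  * z 0%N ^+ (mu1 - mu2 - j).

Arguments standard_poly K k : clear implicits.
Arguments target_poly K k : clear implicits.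
Arguments w_poly K mu1 mu2 j : clear implicits.

(* Main.v *)
Require Import Defs.
From HB Require Import structures.
From mathcomp Require Import all_boot all_order all_algebra.
From mathcomp Require Import ring zify.
From Stdlib Require Import FunctionalExtensionality.
Import Order.TTheory GRing.Theory Num.Theory.
Local Open Scope ring_scope.
Set Implicit Arguments. Unset Strict Implicit.

Section Aux.
Variable K : fieldType.

Lemma is_poly_ext (p q : pfun K) : is_poly p -> (forall y z, p y z = q y z) -> is_poly q.
Proof.
move=> hp e; have -> : q = p by apply: functional_extensionality => y;
  apply: functional_extensionality => z; rewrite e.
exact: hp.
Qed.

Lemma is_poly_exp (p : pfun K) n : is_poly p -> is_poly (fun y z => p y z ^+ n).
Proof.
move=> hp; elim: n => [|n IH].
  by apply: (is_poly_ext (@PolyC K 1)) => y z; rewrite expr0.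
by apply: (is_poly_ext (PolyMul hp IH)) => y z; rewrite exprS.
Qed.

Lemma is_poly_sum n (a : nat -> K) (p : nat -> pfun K) :
  (forall i, is_poly (p i)) -> is_poly (fun y z => \sum_(i < n) a i * p i y z).
Proof.
move=> hp; elim: n => [|n IH].
  by apply: (is_poly_ext (@PolyC K 0)) => y z; rewrite big_ord0.
apply: (is_poly_ext (PolyAdd IH (PolyMul (@PolyC K (a n)) (hp n)))) => y z.
by rewrite big_ord_recr.
Qed.

Lemma is_poly_comp (q : pfun K) (Y Z : nat -> pfun K) :
  is_poly q -> (forall i, is_poly (Y i)) -> (forall i, is_poly (Z i)) ->
  is_poly (fun y z => q (fun i => Y i y z) (fun i => Z i y z)).
Proof.
move=> hq hY hZ; elim: hq => [c|i|i|p1 p2 _ IH1 _ IH2|p1 p2 _ IH1 _ IH2].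
- exact: PolyC.
- exact: hY.
- exact: hZ.
- exact: (PolyAdd IH1 IH2).
- exact: (PolyMul IH1 IH2).
Qed.

Lemma linform_add (l : (nat -> K) -> K) f g : is_linform l ->
  l (fun i => f i + g i) = l f + l g.
Proof.
move=> [n [a ->]]; rewrite -big_split; apply: eq_bigr => i _; by rewrite mulrDr.
Qed.

Lemma linform_0 (l : (nat -> K) -> K) : is_linform l -> l (fun _ => 0) = 0.
Proof. move=> [n [a ->]]; apply: big1 => i _; by rewrite mulr0. Qed.

Definition phi (e : nat -> K) (p : nat -> pfun K) (u : carrier K) : carrier K :=
 (fun t => u.1 (fun i => e i * t i),
  fun y z => u.1 (fun i => p i y z)
     + u.2 (fun i => e i * y i + p i y z) (fun i => e i * z i + p i y z)).

Lemma phi_endo e p : (forall i, is_sq_poly (p i)) -> is_endo (phi e p).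
Proof.
move=> hp; split.
- move=> u [[n [a ea]] [pu u0 u0']]; split.
    exists n, (fun i => a i * e i); rewrite /phi /= ea.
    apply: functional_extensionality => t; apply: eq_bigr => i _; by rewrite mulrA.
  split.
  + apply: PolyAdd.
      rewrite /= ea; apply: is_poly_sum => i; by case: (hp i).
    apply: (is_poly_comp (Y := fun i y z => e i * y i + p i y z)
                         (Z := fun i y z => e i * z i + p i y z)) => // i.
      apply: PolyAdd; [apply: PolyMul; [apply: PolyC|apply: PolyY]|by case: (hp i)].
    apply: PolyAdd; [apply: PolyMul; [apply: PolyC|apply: PolyZ]|by case: (hp i)].
  + move=> z /=.
    have -> : (fun i => p i (fun _ => 0) z) = (fun _ => 0).
      by apply: functional_extensionality => i; case: (hp i) => _ ->.
    have -> : (fun i => e i * 0 + p i (fun _ => 0) z) = (fun _ => 0).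
      by apply: functional_extensionality => i; case: (hp i) => _ -> _; rewrite mulr0 addr0.
    by rewrite u0 linform_0 ?addr0 //; exists n, a.
  + move=> y /=.
    have -> : (fun i => p i y (fun _ => 0)) = (fun _ => 0).
      by apply: functional_extensionality => i; case: (hp i) => _ _ ->.
    have -> : (fun i => e i * 0 + p i y (fun _ => 0)) = (fun _ => 0).
      by apply: functional_extensionality => i; case: (hp i) => _ _ ->; rewrite mulr0 addr0.
    by rewrite u0' linform_0 ?addr0 //; exists n, a.
- move=> u v _ _; rewrite /phi /gadd /=; congr pair.
  apply: functional_extensionality => y; apply: functional_extensionality => z.
  by rewrite addrACA.
- move=> c u _; rewrite /phi /gscale /=; congr pair.
  apply: functional_extensionality => y; apply: functional_extensionality => z.
  by rewrite mulrDr.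
- move=> u v [lu _] [lv _]; rewrite /phi /gmul /=; congr pair.
  apply: functional_extensionality => y; apply: functional_extensionality => z.
  rewrite add0r (linform_add _ _ lu) (linform_add _ _ lv).
  by rewrite !addrA.
Qed.

End Aux.

Theorem lemma4p4 (K : fieldType) (charK : [pchar K] =i pred0) (k : nat) :
  (1 <= k)%N ->
  in_Tideal_gen (gpoly (standard_poly K k)) (gpoly (target_poly K k)) /\
  (forall mu1 mu2 j : nat, w_admissible mu1 mu2 j ->
     in_Tideal_gen (gpoly (standard_poly K k))
       (gpoly (fun y z => target_poly K k y z * w_poly K mu1 mu2 j y z))).
Proof.
move=> k1.
set e : nat -> K := fun i => if i == 1%N then 0 else 1.
set p : nat -> pfun K := fun i => if i == 1%N then (fun y z => y 0%N * z 0%N)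
                                   else (fun _ _ => 0).
have hp : forall i, is_sq_poly (p i).
  move=> i; rewrite /p; case: (i == 1%N).
    split; [exact: (PolyMul (@PolyY K 0%N) (@PolyZ K 0%N))|by move=> z; rewrite mul0r
           |by move=> y; rewrite mulr0].
  by split; [exact: PolyC| |].
have first : in_Tideal_gen (gpoly (standard_poly K k)) (gpoly (target_poly K k)).
  move=> I [_ TI] If.
  have := TI _ (phi_endo e hp) _ If.
  have -> // : phi e p (gpoly (standard_poly K k)) = gpoly (target_poly K k).
  rewrite /phi /gpoly /=; congr pair.
  apply: functional_extensionality => y; apply: functional_extensionality => z.
  rewrite /standard_poly /target_poly /e /p /= add0r -exprMn; congr (_ ^+ _).
  ring.
split => // mu1 mu2 j [hmu hj] I TI If.
have hI := first I TI If.
case: TI => [[_ [_ [_ [_ [_ hr]]]]] _].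
have hw : inG (gpoly (w_poly K mu1 mu2 j)).
  split; first by exists 0%N, (fun _ => 0); apply: functional_extensionality => t;
    rewrite big_ord0.
  rewrite /w_poly /gpoly /=; case: (eqVneq mu2 0%N) => [m0|m0].
    rewrite m0 /= in hj; move/andP: hj => [j1 j2].
    have mj : (0 < mu1 - j)%N by lia.
    split.
    - exact: (PolyMul (is_poly_exp _ (@PolyY K 0%N)) (is_poly_exp _ (@PolyZ K 0%N))).
    - by move=> z; rewrite expr0n; case: j j1 {j2 mj} => //= j _; rewrite mul0r.
    - by move=> y; rewrite (expr0n _ (mu1 - j)); case: (mu1 - j)%N mj => //= n _; rewrite mulr0.
  split.
  - apply: PolyMul; last exact: (is_poly_exp _ (@PolyZ K 0%N)).
    apply: PolyMul; first exact: (is_poly_exp _ (@PolyY K 0%N)).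
    apply: is_poly_exp; apply: PolyAdd; first exact: (PolyMul (@PolyY K 0%N) (@PolyZ K 1%N)).
    apply: (is_poly_ext (PolyMul (@PolyC K (-1)) (PolyMul (@PolyY K 1%N) (@PolyZ K 0%N)))).
    by move=> y z; rewrite mulN1r.
  - by move=> z; rewrite !mul0r subrr (expr0n _ mu2) (negPf m0) mulr0 mul0r.
  - by move=> y; rewrite !mulr0 subrr (expr0n _ mu2) (negPf m0) mulr0 mul0r.
have := hr _ _ hw hI.
have -> // : gmul (gpoly (target_poly K k)) (gpoly (w_poly K mu1 mu2 j)) =
   gpoly (fun y z => target_poly K k y z * w_poly K mu1 mu2 j y z).
rewrite /gmul /gpoly /=; congr pair.
apply: functional_extensionality => y; apply: functional_extensionality => z.
by rewrite !add0r.
Qed.
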